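(* There exist metric spaces $(X,p)$, $(Y,d)$ and a multi-valued function $F: X \Rightarrow Y$ such that there is no metric $d_F$ on the set $F[X] = \{F(x) : x\in X\}$ with the property that for every $x \in X$, the single-valued map $x' \mapsto F(x')$ from $(X,p)$ to $(F[X], d_F)$ is continuous at $x$ (in the usual sense) if and only if $F$ is continuous at $x$ as a multi-valued function.
   Context: A multi-valued function $F: X \Rightarrow Y$ assigns to each $x$ a nonempty set $F(x)\subseteq Y$. $F$ is continuous at $x$ (as a multi-valued function) if there is some $y \in F(x)$ such that for every $\varepsilon>0$ there is $\delta>0$ such that for every $x' \in B_p(x,\delta)$ there is $y' \in F(x')$ with $d(y,y')<\varepsilon$. *)

(* Defs.v *)
From Stdlib Require Import Reals.
Open Scope R_scope.

Definition is_metric {T : Type} (d : T -> T -> R) : Prop :=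
  (forall x y, 0 <= d x y) /\
  (forall x y, d x y = 0 <-> x = y) /\
  (forall x y, d x y = d y x) /\
  (forall x y z, d x z <= d x y + d y z).

Definition is_metric_on {T : Type} (S : T -> Prop) (d : T -> T -> R) : Prop :=
  (forall x y, S x -> S y -> 0 <= d x y) /\
  (forall x y, S x -> S y -> (d x y = 0 <-> x = y)) /\
  (forall x y, S x -> S y -> d x y = d y x) /\
  (forall x y z, S x -> S y -> S z -> d x z <= d x y + d y z).

Definition multi_valued {X Y : Type} (F : X -> Y -> Prop) : Prop :=
  forall x, exists y, F x y.

Definition mv_image {X Y : Type} (F : X -> Y -> Prop) : (Y -> Prop) -> Prop :=
  fun A => exists x, A = F x.

Definition cont_at {X Z : Type} (p : X -> X -> R) (dZ : Z -> Z -> R)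
  (f : X -> Z) (x : X) : Prop :=
  forall eps, 0 < eps -> exists delta, 0 < delta /\
    forall x', p x x' < delta -> dZ (f x) (f x') < eps.

Definition mv_cont_at {X Y : Type} (p : X -> X -> R) (d : Y -> Y -> R)
  (F : X -> Y -> Prop) (x : X) : Prop :=
  exists y, F x y /\
    forall eps, 0 < eps -> exists delta, 0 < delta /\
      forall x', p x x' < delta -> exists y', F x' y' /\ d y y' < eps.

(* Main.v *)
Require Import Defs.
From Stdlib Require Import Reals Lra FunctionalExtensionality PropExtensionality.
Open Scope R_scope.

Lemma Rdist_metric : is_metric R_dist.
Proof.
  split; [|split; [|split]].
  - intros; apply Rge_le, R_dist_pos.
  - intros; apply R_dist_refl.
  - intros; apply R_dist_sym.
  - intros; apply R_dist_tri.
Qed.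

Definition Fex (x y : R) : Prop := y = 0 \/ (x <> 0 /\ y = 1).

Lemma Fex_eq (x : R) : x <> 0 -> Fex x = Fex 1.
Proof.
  intro Hx; apply functional_extensionality; intro y;
  apply propositional_extensionality; unfold Fex; split; intros [H|[_ H]]; auto;
  right; split; auto; lra.
Qed.

Theorem corollary2p7 :
  exists (X Y : Type) (p : X -> X -> R) (d : Y -> Y -> R) (F : X -> Y -> Prop),
    is_metric p /\ is_metric d /\ multi_valued F /\
    ~ exists dF : (Y -> Prop) -> (Y -> Prop) -> R,
        is_metric_on (mv_image F) dF /\
        forall x : X, cont_at p dF F x <-> mv_cont_at p d F x.
Proof.
  exists R, R, R_dist, R_dist, Fex.
  split; [exact Rdist_metric|split; [exact Rdist_metric|split]].
  - intro x; exists 0; left; reflexivity.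
  - intros [dF [[H0 [H1 [_ _]]] Hiff]].
    assert (Hc : cont_at R_dist dF Fex 0).
    { apply Hiff. exists 0; split; [left; reflexivity|].
      intros eps Heps; exists 1; split; [lra|].
      intros x' _; exists 0; split; [left; reflexivity|].
      rewrite (proj2 (R_dist_refl 0 0) eq_refl); exact Heps. }
    assert (Hne : Fex 0 <> Fex 1).
    { intro E. assert (Fex 1 1) by (right; split; lra).
      rewrite <- E in H. destruct H as [H|[H _]]; lra. }
    assert (Im0 : mv_image Fex (Fex 0)) by (exists 0; reflexivity).
    assert (Im1 : mv_image Fex (Fex 1)) by (exists 1; reflexivity).
    assert (Hpos : 0 < dF (Fex 0) (Fex 1)).
    { destruct (Rle_lt_or_eq_dec 0 _ (H0 _ _ Im0 Im1)) as [h|h]; auto.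
      exfalso; apply Hne; apply (H1 _ _ Im0 Im1); auto. }
    destruct (Hc _ Hpos) as [delta [Hd Hx]].
    specialize (Hx (delta/2)).
    rewrite (Fex_eq (delta/2)) in Hx by lra.
    assert (R_dist 0 (delta/2) < delta).
    { unfold R_dist. rewrite Rabs_left by lra. lra. }
    specialize (Hx H). lra.
Qed.
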